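(* Let $g(x)=1-2e^{-x}+\frac{1-e^{-x}}{x}$. For all $0<p<1$ and $s\in\mathbb{Z}^+$, \[ g(sp)\leqslant h^0_{\{1,2\}}(s,p)\leqslant g(sp)+\left(1+\frac{1}{\sqrt e}\right)\frac{p}{1-p}, \] and \[ h^0_{J_{sym}}(s,p)\leqslant\frac12\left(g(sp)+e^{-2sp}g(-sp)\right)+\frac12\left(1+\frac{2}{e^{3/4}}\right)\frac{p}{1-p}+\frac{4e^{3/2}-1}{6e^3}\,\frac{p^2}{(1-p^2)^2}. \]
   Context: $\mathbb{Z}^+$ is the set of positive integers and $J_{sym}=\{2\}\cup\{2m+1:m\geqslant0\}$. For $J\subset\mathbb{Z}^+$, integer $s\geqslant1$ and $0<p<1$, \[ h_J^0(s,p)=\frac{(1-p)^s}{p^2}\left(\frac{p^2}{(1-p)^{s+1}}+\frac{p}{s}\frac{1}{(1-p)^s}-\sum_{k\in J}k\frac{(k+s-2)!}{(k-1)!\,s!}p^k\right). \] In particular $h^0_{\{1,2\}}(s,p)=\frac{1}{1-p}-2(1-p)^s+\frac{1-(1-p)^s}{ps}$ and $h^0_{J_{sym}}(s,p)=\frac12\left(h^0_{\{1,2\}}(s,p)+\frac{(1-p)^s}{(1+p)^s}h^0_{\{1,2\}}(s,-p)\right)$, where $h^0_{\{1,2\}}(s,-p)$ denotes the closed-form expression evaluated at $-p$. *)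

(* Defs.v *)
From Stdlib Require Import Reals.
Open Scope R_scope.

Definition g (x : R) : R := 1 - 2 * exp (- x) + (1 - exp (- x)) / x.

(* Closed form of h^0_{1,2}(s,p) from the context, as a function of a real p
   (so that it can also be evaluated at -p):
   1/(1-p) - 2(1-p)^s + (1-(1-p)^s)/(p s). *)
Definition h12 (s : nat) (p : R) : R :=
  1 / (1 - p) - 2 * (1 - p) ^ s + (1 - (1 - p) ^ s) / (p * INR s).

Definition hsym (s : nat) (p : R) : R :=
  / 2 * (h12 s p + (1 - p) ^ s / (1 + p) ^ s * h12 s (- p)).

(* Main.v *)
Require Import Defs.
From Stdlib Require Import Reals Lra Psatz.
From Coquelicot Require Import Coquelicot.
Open Scope R_scope.

Lemma incr (f df : R->R) p : 0 < p ->
  (forall c, 0 <= c <= p -> is_derive f c (df c)) ->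
  (forall c, 0 <= c <= p -> 0 <= df c) -> f 0 <= f p.
Proof.
  intros hp hd hpos.
  destruct (MVT_cor2 f df 0 p hp) as [c [Hc1 Hc2]].
  { intros c hc; apply is_derive_Reals; auto. }
  assert (0 <= df c) by (apply hpos; lra).
  nra.
Qed.

Lemma log1 p : 0 < p < 1 -> - ln (1 - p) <= p + p^2 / (2 * (1 - p)).
Proof.
  intros [h0 h1].
  set (f := fun y => y + y^2 / (2 * (1 - y)) + ln (1 - y)).
  assert (H := incr f (fun y => y^2 / (2 * (1-y)^2)) p h0).
  assert (f 0 = 0) as F0.
  { unfold f. replace (1 - 0) with 1 by ring. rewrite ln_1. field. }
  assert (0 <= f p) as Fp.
  { rewrite <- F0. apply H.
    - intros c hc. unfold f. auto_derive.
      + lra.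
      + field. lra.
    - intros c hc. apply Rmult_le_pos. nra.
      apply Rlt_le, Rinv_0_lt_compat. nra. }
  unfold f in Fp. lra.
Qed.

Lemma log2 p : 0 < p < 1 -> ln (1 + p) - ln (1 - p) <= 2 * p + 2 * p^3 / (3 * (1 - p^2)).
Proof.
  intros [h0 h1].
  set (f := fun y => 2 * y + 2 * y^3 / (3 * (1 - y^2)) - ln (1 + y) + ln (1 - y)).
  assert (H := incr f (fun y => 4 * y^4 / (3 * (1-y^2)^2)) p h0).
  assert (f 0 = 0) as F0.
  { unfold f. replace (1 - 0) with 1 by ring. replace (1 + 0) with 1 by ring. rewrite ln_1. field. }
  assert (0 <= f p) as Fp.
  { rewrite <- F0. apply H.
    - intros c hc. unfold f. auto_derive.
      + repeat split; try lra. nra.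
      + field. split; try lra. nra.
    - intros c hc. apply Rmult_le_pos. nra.
      apply Rlt_le, Rinv_0_lt_compat. assert (0 < 1 - c^2) by nra. nra. }
  unfold f in Fp. lra.
Qed.

Lemma log3 p : 0 < p < 1 -> 2 * p <= ln (1 + p) - ln (1 - p).
Proof.
  intros [h0 h1].
  set (f := fun y => ln (1 + y) - ln (1 - y) - 2 * y).
  assert (H := incr f (fun y => 2 * y^2 / (1 - y^2)) p h0).
  assert (f 0 = 0) as F0.
  { unfold f. replace (1 - 0) with 1 by ring. replace (1 + 0) with 1 by ring. rewrite ln_1. ring. }
  assert (0 <= f p) as Fp.
  { rewrite <- F0. apply H.
    - intros c hc. unfold f. auto_derive.
      + repeat split; try lra.
      + field. split; try lra. nra.
    - intros c hc. apply Rmult_le_pos. nra.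
      apply Rlt_le, Rinv_0_lt_compat. nra. }
  unfold f in Fp. lra.
Qed.

Lemma ln_le_m1 y : 0 < y -> ln y <= y - 1.
Proof.
  intros hy. pose proof (exp_ineq1_le (ln y - 1)).
  destruct (Rle_or_lt (ln y) (y - 1)) as [h|h]; auto.
  exfalso. pose proof (exp_ineq1_le (y - 1)).
  assert (exp (y - 1) < exp (ln y)) by (apply exp_increasing; lra).
  rewrite exp_ln in H1 by lra. lra.
Qed.

Lemma xexp_le x c : (x + c) * exp (- x) <= exp (c - 1).
Proof.
  pose proof (exp_ineq1_le (x + c - 1)).
  replace (exp (c - 1)) with (exp (x + c - 1) * exp (- x)).
  2:{ rewrite <- exp_plus. f_equal. ring. }
  apply Rmult_le_compat_r. left; apply exp_pos. lra.
Qed.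

Lemma exp_bound d : 0 <= d -> 1 - d <= exp (- d) <= 1.
Proof.
  intros hd. split. pose proof (exp_ineq1_le (- d)). lra.
  rewrite <- exp_0. destruct hd as [hd|hd]. left; apply exp_increasing; lra. subst; rewrite Ropp_0; lra.
Qed.

Theorem lemma5 (s : nat) (p : R) (hs : (1 <= s)%nat) (hp0 : 0 < p) (hp1 : p < 1) :
  (g (INR s * p) <= h12 s p /\
   h12 s p <= g (INR s * p) + (1 + / sqrt (exp 1)) * (p / (1 - p))) /\
  hsym s p <=
    / 2 * (g (INR s * p) + exp (- (2 * INR s * p)) * g (- (INR s * p)))
    + / 2 * (1 + 2 / exp (3 / 4)) * (p / (1 - p))
    + (4 * exp (3 / 2) - 1) / (6 * exp 3) * (p ^ 2 / (1 - p ^ 2) ^ 2).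
Proof.
  assert (hS : 1 <= INR s) by (apply (le_INR 1); exact hs).
  set (S := INR s) in *.
  set (x := S * p).
  assert (hx : 0 < x) by (unfold x; nra).
  set (E := exp (- x)).
  assert (hE : 0 < E) by apply exp_pos.
  set (a := (1 - p) ^ s).
  set (b := (1 + p) ^ s).
  assert (Ha : a = exp (S * ln (1 - p))).
  { unfold a, S. rewrite <- Rpower_pow by lra. reflexivity. }
  assert (Hb : b = exp (S * ln (1 + p))).
  { unfold b, S. rewrite <- Rpower_pow by lra. reflexivity. }
  assert (hb : 0 < b) by (rewrite Hb; apply exp_pos).
  set (d := - (S * ln (1 - p)) - x).
  assert (hd0 : 0 <= d).
  { unfold d, x. pose proof (ln_le_m1 (1 - p)). nra. }
  assert (hd1 : d <= x * p / (2 * (1 - p))).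
  { unfold d, x. pose proof (log1 p). 
    replace (S * p * p / (2 * (1 - p))) with (S * (p^2 / (2 * (1 - p)))) by (field; lra). nra. }
  assert (Ha2 : a = E * exp (- d)).
  { rewrite Ha. unfold E. rewrite <- exp_plus. f_equal. unfold d. ring. }
  destruct (exp_bound d hd0) as [hed1 hed2].
  assert (ht0 : 0 <= E - a) by (rewrite Ha2; nra).
  assert (ht1 : E - a <= E * (x * p / (2 * (1 - p)))).
  { rewrite Ha2. assert (E * (1 - d) <= E * exp (-d)) by (apply Rmult_le_compat_l; lra).
    assert (E * d <= E * (x * p / (2 * (1 - p)))) by (apply Rmult_le_compat_l; lra). nra. }
  set (X := p / (1 - p)).
  assert (hX : 0 < X) by (unfold X; apply Rdiv_lt_0_compat; lra).
  assert (Hh12 : h12 s p - g x = X + 2 * (E - a) + (E - a) / x).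
  { unfold h12, g. fold a. fold S. fold E. unfold X.
    replace (p * S) with x by (unfold x; ring). field. split; lra. }
  assert (key1 : 2 * (E - a) + (E - a) / x <= (x + 1/2) * E * X).
  { replace (2 * (E - a) + (E - a) / x) with ((E - a) * (2 + / x)) by (field; lra).
    apply Rle_trans with (E * (x * p / (2 * (1 - p))) * (2 + / x)).
    apply Rmult_le_compat_r. left. assert (0 < / x) by (apply Rinv_0_lt_compat; lra). lra. lra.
    right. unfold X. field. split; lra. }
  assert (hsq : / sqrt (exp 1) = exp (1/2 - 1)).
  { replace (exp 1) with (exp (1/2) * exp (1/2)) by (rewrite <- exp_plus; f_equal; lra).
    rewrite sqrt_square by (left; apply exp_pos).
    replace (1/2 - 1) with (- (1/2)) by lra. rewrite exp_Ropp. reflexivity. }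
  assert (hxe : (x + 1/2) * E <= exp (1/2 - 1)) by apply xexp_le.
  split; [split|].
  - assert (0 <= (E - a) / x) by (apply Rdiv_le_0_compat; lra). fold x. lra.
  - fold x. rewrite hsq.
    assert ((x + 1/2) * E * X <= exp (1/2 - 1) * X) by (apply Rmult_le_compat_r; lra). nra.
  - set (c := a / b).
    set (d2 := S * (ln (1 + p) - ln (1 - p)) - 2 * x).
    assert (hd20 : 0 <= d2) by (unfold d2, x; pose proof (log3 p); nra).
    assert (hd21 : d2 / x <= 2 * p^2 / (3 * (1 - p^2))).
    { unfold d2, x. pose proof (log2 p). 
      apply Rle_trans with ((S * (2 * p^3 / (3 * (1 - p^2)))) / (S * p)).
      apply Rmult_le_compat_r. left; apply Rinv_0_lt_compat; nra. nra.
      right. field. assert (0 < 1 - p^2) by nra. repeat split; lra. }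
    assert (Hc : c = E * E * exp (- d2)).
    { unfold c. rewrite Ha, Hb. unfold E. rewrite <- !exp_plus. unfold Rdiv. rewrite <- exp_Ropp, <- exp_plus. f_equal. unfold d2. ring. }
    destruct (exp_bound d2 hd20) as [he1 he2].
    set (w := E * E - c).
    assert (hw0 : 0 <= w) by (unfold w; rewrite Hc; nra).
    assert (hw1 : w <= E * E * d2) by (unfold w; rewrite Hc; nra).
    assert (He2 : exp (- (2 * S * p)) = E * E).
    { unfold E. rewrite <- exp_plus. f_equal. unfold x. ring. }
    rewrite He2.
    assert (Hex : exp (- - x) = / E).
    { rewrite Ropp_involutive. unfold E. rewrite (exp_Ropp x). field. apply Rgt_not_eq, exp_pos. }
    assert (Hid : h12 s p + c * h12 s (- p) - g x - E * E * g (- x)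
                  = X + 4 * (E - a) + w / x - E * E * (p / (1 + p)) - w / (1 + p)).
    { unfold h12, g. replace (1 - - p) with (1 + p) by ring. fold a b S E. rewrite Hex.
      unfold w, c, X. replace (- p * S) with (- x) by (unfold x; ring).
      replace (p * S) with x by (unfold x; ring). field. repeat split; lra. }
    unfold hsym. replace ((1 - p) ^ s / (1 + p) ^ s) with c by reflexivity.
    fold x.
    set (C := (4 * exp (3 / 2) - 1) / (6 * exp 3)).
    set (Q := p ^ 2 / (1 - p ^ 2) ^ 2).
    assert (hC : 2 / 25 <= C).
    { set (y := exp (3/2)).
      assert (hy : (11/8)^4 <= y).
      { unfold y. replace (3/2) with (3/8 + 3/8 + 3/8 + 3/8) by lra. rewrite !exp_plus.
        pose proof (exp_ineq1_le (3/8)). 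
        assert (0 <= 11/8) by lra.
        replace ((11/8)^4) with ((11/8)*(11/8)*(11/8)*(11/8)) by ring.
        repeat apply Rmult_le_compat; try lra; try (apply Rmult_le_pos); try lra. }
      assert (h3 : exp 3 = y * y).
      { unfold y. rewrite <- exp_plus. f_equal. lra. }
      assert (h27 : exp 3 <= 27).
      { replace 3 with (1 + 1 + 1) by lra. rewrite !exp_plus. pose proof exp_le_3.
        pose proof (exp_pos 1). replace 27 with (3*3*3) by lra.
        repeat apply Rmult_le_compat; try lra; try (apply Rmult_le_pos); lra. }
      assert (hy2 : 7/2 <= y) by (simpl in hy; lra). unfold C. fold y. rewrite h3 in *. apply Rle_trans with ((4*y-1)/(6*27)).
      unfold Rdiv. rewrite Rmult_comm. nra.
      apply Rmult_le_compat_l. lra. apply Rinv_le_contravar. nra. lra. }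
    assert (hQ : 0 <= Q).
    { unfold Q. apply Rdiv_le_0_compat. nra. assert (0 < 1 - p^2) by nra. nra. }
    assert (hpoly : 2 * p^2 / (3 * (1 - p^2)) - p / (1 + p) <= 4 / 25 * Q).
    { assert (0 <= (p - 39/50)^2 * (125 * p + 120)). { apply Rmult_le_pos. apply pow2_ge_0. lra. }
      assert (hq : 0 < 1 - p^2) by nra.
      unfold Q. 
      assert (0 <= 4 / 25 * (p ^ 2 / (1 - p ^ 2) ^ 2) - (2 * p^2 / (3 * (1 - p^2)) - p / (1 + p))).
      { replace (4 / 25 * (p ^ 2 / (1 - p ^ 2) ^ 2) - (2 * p^2 / (3 * (1 - p^2)) - p / (1 + p)))
        with (p * (125*p^3 - 75*p^2 - 113*p + 75) / (75 * (1 - p^2)^2)).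
        apply Rdiv_le_0_compat. nra. nra.
        field. split; try lra. }
      lra. }
    assert (hE1 : E <= 1).
    { unfold E. rewrite <- exp_0. left. apply exp_increasing. lra. }
    assert (hlast : E * E * (2 * p^2 / (3 * (1 - p^2)) - p / (1 + p)) <= 2 * C * Q).
    { destruct (Rle_or_lt (2 * p^2 / (3 * (1 - p^2)) - p / (1 + p)) 0) as [hn|hn].
      - assert (0 <= E * E) by nra. nra.
      - assert (E * E <= 1) by nra. nra. }
    assert (hwx : w / x <= E * E * (2 * p^2 / (3 * (1 - p^2)))).
    { apply Rle_trans with (E * E * d2 / x).
      apply Rmult_le_compat_r. left; apply Rinv_0_lt_compat; lra. lra.
      unfold Rdiv at 1. rewrite Rmult_assoc. apply Rmult_le_compat_l. nra. exact hd21. }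
    assert (hw1p : 0 <= w / (1 + p)) by (apply Rdiv_le_0_compat; lra).
    assert (h4 : 4 * (E - a) <= 2 / exp (3 / 4) * X).
    { assert (hxe0 : (x + 0) * E <= exp (0 - 1)) by apply xexp_le.
      assert (hee : exp (0 - 1) <= / exp (3/4)).
      { replace (0 - 1) with (- (1)) by lra. rewrite exp_Ropp. apply Rinv_le_contravar. apply exp_pos.
        left. apply exp_increasing. lra. }
      apply Rle_trans with (4 * (E * (x * p / (2 * (1 - p))))). lra.
      replace (4 * (E * (x * p / (2 * (1 - p))))) with (2 * ((x + 0) * E) * X) by (unfold X; field; lra).
      apply Rmult_le_compat_r. lra. unfold Rdiv. lra. }
    nra.
Qed.
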